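(* Let $S$ be a set, $x\in\mathbb{R}$, $b\neq 0$, and let $f:\mathbb{R}\to S$ be a scenario that is past-periodic on $(-\infty,x)$ with period $b$. If $f$ is periodic, then $b$ is a period of $f$, i.e. $f(y)=f(y+b)$ for all $y\in\mathbb{R}$.
   Context: A scenario is a function $f:\mathbb{R}\to S$. For $b\in\mathbb{R}$, $t^b(y)=y+b$. A scenario $f$ is periodic if there is $c\neq 0$ with $f=f\circ t^c$ ($c$ is then a period of $f$). $f$ is past-periodic on $(-\infty,x)$ with period $b$ if $b\ne 0$ and $f\upharpoonright(-\infty,x)=(f\circ t^b)\upharpoonright(-\infty,x)$. *)

(* Defs.v *)
From Stdlib Require Import Reals.
Open Scope R_scope.

Definition t (b : R) : R -> R := fun y => y + b.

Definition is_period {S : Type} (f : R -> S) (c : R) : Prop :=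
  c <> 0 /\ f = (fun y => f (t c y)).

Definition periodic {S : Type} (f : R -> S) : Prop :=
  exists c : R, is_period f c.

Definition past_periodic {S : Type} (f : R -> S) (x b : R) : Prop :=
  b <> 0 /\ forall y : R, y < x -> f y = f (t b y).

(* Main.v *)
Require Import Defs.
From Stdlib Require Import Reals Lra ZArith.
Open Scope R_scope.

Lemma iter_per (S : Type) (f : R -> S) (d : R) :
  (forall z, f z = f (z + d)) -> forall n z, f z = f (z + INR n * d).
Proof.
  intros H n; induction n as [|n IH]; intros z.
  - simpl. f_equal; ring.
  - rewrite S_INR. rewrite (IH z). rewrite (H (z + INR n * d)). f_equal; ring.
Qed.

Theorem lemma3 (S : Type) (x b : R) (f : R -> S) :
  b <> 0 -> past_periodic f x b -> periodic f ->
  forall y : R, f y = f (y + b).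
Proof.
  intros _ [_ Hp] [c [Hc Hf]].
  assert (Hc' : forall z, f z = f (z + c)).
  { intro z. exact (f_equal (fun g => g z) Hf). }
  assert (Hd : exists d, d < 0 /\ forall z, f z = f (z + d)).
  { destruct (Rlt_or_le c 0) as [Hl|Hl].
    - exists c; auto.
    - exists (- c). split. lra.
      intro z. rewrite (Hc' (z + - c)). f_equal; ring. }
  destruct Hd as [d [Hdneg Hdp]].
  intro y.
  destruct (archimed ((y - x) / (- d))) as [Hup _].
  set (m := up ((y - x) / - d)) in *.
  destruct (Z_lt_le_dec m 0%Z) as [Hm|Hm].
  -
    apply IZR_lt in Hm.
    assert (y < x).
    { assert ((y - x) / - d < 0) by lra.
      assert (y - x < 0).
      { apply Rnot_le_lt; intro Hle.
        assert (0 <= (y-x) / - d) by (apply Rle_mult_inv_pos; lra). lra. }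
      lra. }
    apply Hp; auto.
  - destruct (IZN m Hm) as [n Hn].
    assert (Hlt : y + INR n * d < x).
    { rewrite INR_IZR_INZ, <- Hn.
      assert (Hm2 : (y - x) < IZR m * (- d)).
      { apply (Rmult_lt_compat_r (-d)) in Hup; [|lra].
        unfold Rdiv in Hup. rewrite Rmult_assoc, Rinv_l in Hup by lra. lra. }
      lra. }
    rewrite (iter_per S f d Hdp n y).
    rewrite (iter_per S f d Hdp n (y + b)).
    rewrite (Hp _ Hlt). unfold t. f_equal; ring.
Qed.
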